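(* Let $\pi$ be a permutation of a finite set $F$. Suppose $\mathcal{C}\subset 2^F$ and $G\subset F$ satisfy: (1) $\pi(E)=E$ for every $E\in\mathcal{C}$; (2) if $E_1,E_2\in\mathcal{C}$, then $E_1\cup E_2\in\mathcal{C}$ and $E_1\setminus E_2\in\mathcal{C}$; (3) $G\neq\emptyset$ and $\pi(G)=G$; (4) if $E\subset G$ and $\pi(E)=E$, then $E\in\mathcal{C}$. Then $$\sum_{E\in\mathcal{C}\setminus\{\emptyset\}}(-1)^{|E|+1}\operatorname{sgn}(\pi|_E)=1.$$
   Context: For $E$ with $\pi(E)=E$, $\pi|_E$ is a permutation of $E$ and $\operatorname{sgn}(\pi|_E)$ denotes its sign. *)

(* Defs.v *)
From mathcomp Require Import all_boot all_order all_algebra all_fingroup.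
Set Implicit Arguments. Unset Strict Implicit. Unset Printing Implicit Defensive.
Import GRing.Theory.
Local Open Scope ring_scope.

(* The map x |-> pi x on the subtype E = {x | x \in E}; when pi(E) = E this
   is the restriction pi|_E (the default "x" is never used in that case). *)
Definition restr_fun (F : finType) (pi : {perm F}) (E : {set F})
  : {x : F | x \in E} -> {x : F | x \in E} :=
  fun x => insubd x (pi (val x)).

(* sgn(pi|_E) in int, as the sign of the permutation of the finite type E;
   (defaults to 1 if pi does not restrict to a permutation of E, a case
   never used in the theorem since pi(E) = E there). *)
Definition sgn_restr (F : finType) (pi : {perm F}) (E : {set F}) : int :=
  match @injectiveP _ _ (@restr_fun F pi E) with
  | ReflectT h => (-1) ^+ odd_perm (perm h)
  | ReflectF _ => 1
  end.

(* Main.v *)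
Require Import Defs.
From mathcomp Require Import all_boot all_order all_algebra all_fingroup.
Import GRing.Theory.
Local Open Scope ring_scope.

Set Implicit Arguments.
Section Aux.
Variables (F : finType) (pi : {perm F}).
Local Open Scope group_scope.

Lemma inv_in (E : {set F}) x : pi @: E = E -> x \in E -> pi x \in E.
Proof. by move=> hE xE; rewrite -hE imset_f. Qed.

Lemma inv_expr (E : {set F}) x i : pi @: E = E -> x \in E -> (pi ^+ i) x \in E.
Proof.
move=> hE xE; elim: i => [|i IH]; first by rewrite expg0 perm1.
by rewrite expgSr permM inv_in.
Qed.

Lemma inv_orbit (E : {set F}) x : pi @: E = E -> x \in E -> porbit pi x \subset E.
Proof. by move=> hE xE; apply/subsetP=> y /porbitP[i ->]; apply: inv_expr. Qed.

Lemma orbit_inv x : pi @: porbit pi x = porbit pi x.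
Proof.
apply/eqP; rewrite eqEcard card_imset; last exact: perm_inj.
rewrite leqnn andbT; apply/subsetP=> y /imsetP[z /porbitP[i ->] ->].
by rewrite -permM -expgSr mem_porbit.
Qed.

Definition kk (E : {set F}) := #|[set porbit pi y | y in E]|.

Lemma key (E : {set F}) : pi @: E = E ->
  sgn_restr pi E = ((-1) ^+ (#|E| + kk E)%N)%R.
Proof.
move=> hE.
have hv : forall y : {x : F | x \in E}, val (@restr_fun F pi E y) = pi (val y).
  by move=> y; rewrite /restr_fun insubdK // inv_in // (valP y).
rewrite /sgn_restr; case: injectiveP => [hinj|hn]; last first.
  exfalso; apply: hn => a b /(congr1 val); rewrite !hv => /perm_inj.
  exact: val_inj.
set s := perm hinj.
have hs : forall i y, val ((s ^+ i) y) = (pi ^+ i) (val y).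
  elim=> [|i IH] y; first by rewrite !expg0 !perm1.
  by rewrite !expgSr !permM permE hv IH.
rewrite /odd_perm signr_addb !signr_odd card_sig -exprD; congr (_ ^+ _)%R; congr (_ + _)%N.
rewrite /porbits /kk.
rewrite -(card_imset _ (imset_inj val_inj)) -imset_comp.
apply: eq_card => A; apply/imsetP/imsetP.
- move=> [y _ ->]; exists (val y); first exact: valP.
  apply/setP=> z; apply/imsetP/porbitP.
  + by move=> [w /porbitP[i ->] ->]; exists i; rewrite hs.
  + by move=> [i ->]; exists ((s ^+ i) y); rewrite ?mem_porbit ?hs.
- move=> [y yE ->]; exists (Sub y yE) => //.
  apply/setP=> z; apply/porbitP/imsetP.
  + by move=> [i ->]; exists ((s ^+ i) (Sub y yE)); rewrite ?mem_porbit ?hs.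
  + by move=> [w /porbitP[i ->] ->]; exists i; rewrite hs.
Qed.

End Aux.

Theorem lemma2p3 (F : finType) (pi : {perm F}) (C : {set {set F}})
    (G : {set F})
    (h1 : forall E, E \in C -> pi @: E = E)
    (h2 : forall E1 E2, E1 \in C -> E2 \in C ->
            (E1 :|: E2) \in C /\ (E1 :\: E2) \in C)
    (h3 : G != set0 /\ pi @: G = G)
    (h4 : forall E : {set F}, E \subset G -> pi @: E = E -> E \in C) :
  \sum_(E in C :\ (set0 : {set F})) (-1) ^+ (#|E| + 1)%N * sgn_restr pi E = 1 :> int.
Proof.
case: h3 => /set0Pn[g gG] hG.
have GC : G \in C by apply: h4.
have C0 : set0 \in C by rewrite -(setDv G); case: (h2 _ _ GC GC).
set O := porbit pi g.
have OC : O \in C by apply: h4; [apply: inv_orbit | apply: orbit_inv].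
have gO : g \in O by apply: porbit_id.
have Hf : forall E, E \in C ->
   (-1) ^+ (#|E| + 1)%N * sgn_restr pi E = (-1) ^+ (kk pi E + 1)%N :> int.
  move=> E EC; rewrite key ?h1 // -exprD -signr_odd -[RHS]signr_odd.
  by congr (_ ^+ _); rewrite !oddD; case: (odd #|E|); case: (odd (kk pi E)).
have -> : \sum_(E in C :\ (set0 : {set F})) (-1) ^+ (#|E| + 1)%N * sgn_restr pi E
   = \sum_(E in C :\ (set0 : {set F})) (-1) ^+ (kk pi E + 1)%N :> int.
  by apply: eq_bigr => E; rewrite !inE => /andP[_ /Hf].
suff S0 : \sum_(E in C) (-1) ^+ (kk pi E + 1)%N = 0 :> int.
  move: S0; rewrite (big_setD1 _ C0) /= /kk imset0 cards0 expr1.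
  by move/eqP; rewrite addrC subr_eq0 => /eqP.
rewrite (bigID (fun E : {set F} => g \in E)) /=.
have disj : forall E, E \in C -> g \notin E -> forall y, y \in O -> y \notin E.
  move=> E EC gE y yO; apply: contra gE => yE.
  by apply: (subsetP (inv_orbit (h1 _ EC) yE)); rewrite porbit_sym.
have -> : \sum_(E | (E \in C) && (g \in E)) (-1) ^+ (kk pi E + 1)%N
   = \sum_(E | (E \in C) && (g \notin E)) - (-1) ^+ (kk pi E + 1)%N :> int.
  rewrite (reindex_onto (fun E => E :|: O) (fun E => E :\: O)); last first.
    move=> E /andP[EC gE]; apply/setP=> y; rewrite !inE.
    case yO: (y \in O); rewrite ?orbT ?orbF //=.
    by apply/esym/(subsetP (inv_orbit (h1 _ EC) gE)).
  rewrite (eq_bigl (fun E => (E \in C) && (g \notin E))); last first.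
    move=> E /=; apply/idP/idP.
    - move=> /andP[/andP[EOC _] /eqP <-]; apply/andP; split.
        by case: (h2 _ _ EOC OC).
      by rewrite !inE gO.
    - move=> /andP[EC gE]; rewrite !inE gO orbT andbT.
      rewrite (proj1 (h2 _ _ EC OC)) /=; apply/eqP/setP=> y; rewrite !inE.
      case yO: (y \in O) => /=; last by rewrite orbF.
      by rewrite (negbTE (disj _ EC gE _ yO)).
  apply: eq_bigr => E /andP[EC gE].
  suff -> : kk pi (E :|: O) = (kk pi E).+1 by rewrite exprS mulN1r.
  rewrite /kk imsetU.
  have -> : [set porbit pi y | y in O] = [set O].
    apply/setP=> A; rewrite inE; apply/imsetP/eqP.
    - by move=> [y yO ->]; apply/eqP; rewrite eq_porbit_mem.
    - by move=> ->; exists g.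
  rewrite setUC cardsU1; suff -> : O \notin [set porbit pi y | y in E] by rewrite add1n.
  apply/imsetP=> [[y yE hy]].
  have : g \in porbit pi y by rewrite -hy.
  by rewrite porbit_sym => /(disj _ EC gE); rewrite yE.
by rewrite sumrN addNr.
Qed.
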